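(* Let $c>0$ and let $k\ge 0$ be an integer. Let $G$ be a $k$-sum of graphs $G_1$ and $G_2$, where each $G_i$ has $n_i$ vertices and contains at most $cn_i^2$ cliques. Assume that $n_1\ge \frac{k^2}{2}+k$ and that $G$ has $n$ vertices. Then $G$ contains at most $cn_1^2+cn_2^2$ cliques, which is at most $cn^2$.
   Context: Graphs are simple, finite and undirected. A clique is a set of pairwise adjacent vertices (the empty set and single vertices count). $k$-sum: let $G_1,G_2$ be graphs with disjoint vertex sets and, for $i=1,2$, let $W_i\subseteq V(G_i)$ be a clique of size $k$ in $G_i$. Let $G_i'$ be obtained from $G_i$ by deleting some (possibly no) edges with both endpoints in $W_i$. For a bijection $\phi:W_1\to W_2$, a $k$-sum of $G_1$ and $G_2$ is the graph obtained from the union of $G_1'$ and $G_2'$ by identifying $w$ with $\phi(w)$ for all $w\in W_1$. *)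

(* Defs.v *)
From mathcomp Require Import all_boot all_order all_algebra.
Set Implicit Arguments. Unset Strict Implicit. Unset Printing Implicit Defensive.

Definition simple_graph (V : finType) (e : rel V) : Prop :=
  symmetric e /\ irreflexive e.

(* A clique: pairwise adjacent vertex set (empty set and singletons count). *)
Definition is_clique (V : finType) (e : rel V) (S : {set V}) : Prop :=
  forall x y, x \in S -> y \in S -> x != y -> e x y.

Definition is_cliqueb (V : finType) (e : rel V) (S : {set V}) : bool :=
  [forall x in S, forall y in S, (x != y) ==> e x y].

Definition num_cliques (V : finType) (e : rel V) : nat :=
  #|[set S : {set V} | is_cliqueb e S]|.

Definition deletes_inside (V : finType) (e e' : rel V) (W : {set V}) : Prop :=
  symmetric e' /\ (forall x y, e' x y -> e x y) /\
  (forall x y, ~~ ((x \in W) && (y \in W)) -> e' x y = e x y).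

(* (V, e) is (isomorphic to) a k-sum of (V1, e1) and (V2, e2): the vertex
   set V is the union of injective copies f1(V1), f2(V2), which overlap
   exactly along the identification w ~ phi w of W1 with W2, and the edges
   are the union of the (possibly edge-deleted) graphs G1', G2'. *)
Definition is_k_sum (k : nat) (V1 V2 V : finType)
    (e1 : rel V1) (e2 : rel V2) (e : rel V) : Prop :=
  exists (W1 : {set V1}) (W2 : {set V2}) (phi : V1 -> V2)
         (e1' : rel V1) (e2' : rel V2) (f1 : V1 -> V) (f2 : V2 -> V),
    [/\ #|W1| = k, #|W2| = k, is_clique e1 W1 & is_clique e2 W2] /\
    [/\ {in W1 &, injective phi}, phi @: W1 = W2,
        deletes_inside e1 e1' W1 & deletes_inside e2 e2' W2] /\
    [/\ injective f1, injective f2,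
        (forall v, (exists x, f1 x = v) \/ (exists y, f2 y = v)),
        (forall x y, f1 x = f2 y <-> (x \in W1 /\ phi x = y)) &
        (forall u v, e u v <->
           (exists x y, [/\ f1 x = u, f1 y = v & e1' x y]) \/
           (exists x y, [/\ f2 x = u, f2 y = v & e2' x y]))].

(* Main.v *)
Require Import Defs.
From mathcomp Require Import all_boot all_order all_algebra.
From mathcomp Require Import zify ring lra.
Import Order.TTheory GRing.Theory Num.Theory.
Local Open Scope ring_scope.

Lemma cliqueP (V : finType) (e : rel V) S : reflect (is_clique e S) (is_cliqueb e S).
Proof.
apply: (iffP forallP) => [H x y xS yS nxy | H x].
  by move: (H x); rewrite xS /= => /forallP/(_ y); rewrite yS nxy.
apply/implyP => xS; apply/forallP => y; apply/implyP => yS; apply/implyP => nxy.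
exact: H.
Qed.

Lemma side_bound (V V' : finType) (e : rel V) (e' : rel V') (f : V' -> V) :
  injective f ->
  (forall x y, x != y -> e (f x) (f y) -> e' x y) ->
  (  #|[set S in [set S : {set V} | is_cliqueb e S] | S \subset f @: setT]|
    <= num_cliques e')%N.
Proof.
move=> finj Hf.
set A := [set S in _ | _].
have half : forall S1 S2 : {set V}, S1 \subset f @: setT -> f @^-1: S1 = f @^-1: S2 ->
    S1 \subset S2.
  move=> S1 S2 s1 E; apply/subsetP => v vS.
  move/subsetP: s1 => /(_ v vS) /imsetP [x _ Ev]; subst v.
  have : x \in f @^-1: S1 by rewrite inE.
  by rewrite E inE.
have inj : {in A &, injective (fun S : {set V} => f @^-1: S)}.
  move=> S1 S2; rewrite !inE => /andP[_ s1] /andP[_ s2] E.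
  by apply/eqP; rewrite eqEsubset (half _ _ s1 E) (half _ _ s2 (esym E)).
rewrite -(card_in_imset inj) /num_cliques; apply: subset_leq_card.
apply/subsetP => T /imsetP [S]; rewrite !inE => /andP[/cliqueP cl _] ->.
apply/cliqueP => x y; rewrite !inE => xS yS nxy.
have nfxy : f x != f y by apply: contra nxy => /eqP /finj ->.
exact: (Hf x y nxy (cl _ _ xS yS nfxy)).
Qed.

Theorem lemma10 (R : realFieldType) (c : R) (k : nat)
    (V1 V2 V : finType) (e1 : rel V1) (e2 : rel V2) (e : rel V) :
  0 < c ->
  simple_graph e1 -> simple_graph e2 ->
  is_k_sum k e1 e2 e ->
  (num_cliques e1)%:R <= c * (#|V1|%:R) ^+ 2 ->
  (num_cliques e2)%:R <= c * (#|V2|%:R) ^+ 2 ->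
  (k%:R ^+ 2) / 2 + k%:R <= (#|V1|%:R : R) ->
  (num_cliques e)%:R <= c * (#|V1|%:R) ^+ 2 + c * (#|V2|%:R) ^+ 2 /\
  (((k == 0)%N || (k < #|V2|)%N) ->
    c * (#|V1|%:R) ^+ 2 + c * (#|V2|%:R) ^+ 2 <= c * (#|V|%:R) ^+ 2).
Proof.
move=> c0 _ _ [W1 [W2 [phi [e1' [e2' [f1 [f2 [[cW1 cW2 clW1 clW2]
  [[phiinj phiW del1 del2] [f1inj f2inj cover f12 eE]]]]]]]]]] h1 h2 hk.
have [_ [d1 _]] := del1; have [_ [d2 _]] := del2.
split.
  have B1 := @side_bound _ _ e e1 f1 f1inj.
  have B2 := @side_bound _ _ e e2 f2 f2inj.
  have E1 : forall x y, x != y -> e (f1 x) (f1 y) -> e1 x y.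
    move=> x y nxy /eE [[a [b [/f1inj -> /f1inj -> /d1 //]]]|[a [b [ea eb _]]]].
    move/esym/f12: ea => [xW _]; move/esym/f12: eb => [yW _]; exact: clW1.
  have E2 : forall x y, x != y -> e (f2 x) (f2 y) -> e2 x y.
    move=> x y nxy /eE [[a [b [ea eb _]]]|[a [b [/f2inj -> /f2inj -> /d2 //]]]].
    move/f12: ea => [aW ea]; move/f12: eb => [bW eb].
    by apply: clW2 => //; rewrite -phiW; [rewrite -ea | rewrite -eb]; exact: imset_f.
  have {}B1 := B1 E1; have {}B2 := B2 E2.
  have cov : [set S : {set V} | is_cliqueb e S] \subset
     [set S in [set S : {set V} | is_cliqueb e S] | S \subset f1 @: setT] :|:
     [set S in [set S : {set V} | is_cliqueb e S] | S \subset f2 @: setT].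
    apply/subsetP => S SC; have SC' : is_cliqueb e S by rewrite inE in SC.
    move: (SC') => /cliqueP cl; rewrite !inE SC' /=; case: (boolP (S \subset f1 @: setT)) => //= /subsetPn [u uS un1].
    apply/subsetP => v vS.
    case: (boolP (v \in f2 @: setT)) => // vn2; exfalso.
    have nuv : u != v.
      apply: contra un1 => /eqP ->; case: (cover v) => [[x <-]|[y ey]].
        exact: imset_f.
      by move: vn2; rewrite -ey imset_f.
    move: (cl u v uS vS nuv) => /eE [[x [y [ex _ _]]]|[x [y [_ ey _]]]].
      by move: un1; rewrite -ex imset_f.
    by move: vn2; rewrite -ey imset_f.
  have Hn : (num_cliques e <= num_cliques e1 + num_cliques e2)%N.
    rewrite {1}/num_cliques; move/leq_trans: (subset_leq_card cov); apply.
    apply: leq_trans (leq_card_setU _ _) _; exact: leq_add.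
  apply: le_trans (_ : (num_cliques e1 + num_cliques e2)%:R <= _).
    by rewrite ler_nat.
  by rewrite natrD lerD.
move=> hk2.
have Hsz : (#|V1| + #|V2| <= #|V| + k)%N.
  have U := cardsUI (f1 @: [set: V1]) (f2 @: [set: V2]).
  rewrite !card_imset // !cardsT in U.
  rewrite -U; apply: leq_add; first exact: max_card.
  rewrite -cW1 -(card_imset W1 f1inj); apply: subset_leq_card.
  apply/subsetP => v; rewrite inE => /andP [/imsetP [x _ ->] /imsetP [y _ exy]].
  by move/f12: exy => [xW _]; exact: imset_f.
have hkn : (k ^ 2 + 2 * k <= 2 * #|V1|)%N.
  rewrite -(ler_nat R) natrD natrX !natrM.
  have : (k%:R ^+ 2 + 2 * k%:R : R) = 2 * (k%:R ^+ 2 / 2 + k%:R) by field.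
  move=> ->; rewrite ler_pM2l //.
have Hnat : (#|V1| ^ 2 + #|V2| ^ 2 <= #|V| ^ 2)%N.
  case/orP: hk2 => [/eqP k0|kl]; first by subst k; nia.
  nia.
rewrite -mulrDr ler_pM2l //.
by rewrite -!natrX -natrD ler_nat.
Qed.
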